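(* Let $\delta\ge 2$, $n\ge 7\delta-7$ and $s$ be integers with $\delta+1\le s\le n/2$. Then $$\rho_Q\big(K_s\vee(K_{n-2s+1}\cup(s-1)K_1)\big)\ <\ \rho_Q\big(K_\delta\vee(K_{n-2\delta+1}\cup(\delta-1)K_1)\big).$$
   Context: $Q(G)=A(G)+D(G)$ is the signless Laplacian matrix (adjacency matrix plus diagonal degree matrix) and $\rho_Q(G)$ its largest eigenvalue. $K_m$ is the complete graph on $m$ vertices, $tK_1$ the edgeless graph on $t$ vertices, $\cup$ disjoint union, and $G_1\vee G_2$ the join (disjoint union plus all edges between $V(G_1)$ and $V(G_2)$). *)

(* Defs.v *)
From HB Require Import structures.
From mathcomp Require Import all_boot all_order all_algebra.
From mathcomp Require Import boolp classical_sets reals.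
Set Implicit Arguments. Unset Strict Implicit. Unset Printing Implicit Defensive.
Import Order.TTheory GRing.Theory Num.Theory.
Local Open Scope ring_scope.

(* A simple graph on the vertex set 'I_n is given by a relation e
   (assumed symmetric and irreflexive where relevant). *)

Definition adj_mx (R : realType) (n : nat) (e : rel 'I_n) : 'M[R]_n :=
  \matrix_(i, j) (e i j)%:R.

Definition deg (n : nat) (e : rel 'I_n) (i : 'I_n) : nat := #|[set j | e i j]|.

Definition signless_lap (R : realType) (n : nat) (e : rel 'I_n) : 'M[R]_n :=
  adj_mx R e + diag_mx (\row_i ((deg e i)%:R : R)).

(* rho_Q(G): the largest eigenvalue of Q(G) (the supremum of the finite,
   nonempty set of real eigenvalues of the real symmetric matrix Q(G)). *)
Definition rhoQ (R : realType) (n : nat) (e : rel 'I_n) : R :=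
  sup [set a : R | eigenvalue (signless_lap R e) a].

(* The graph K_s \vee (K_{n-2s+1} \cup (s-1)K_1) on vertices 0..n-1:
   vertices 0..s-1 form K_s, vertices s..n-s form K_{n-2s+1},
   vertices n-s+1..n-1 are the s-1 isolated vertices of (s-1)K_1;
   the join adds all edges between {0..s-1} and the rest. *)
Definition join_graph (n s : nat) : rel 'I_n :=
  fun i j => (i != j) &&
    [|| (i < s)%N, (j < s)%N | ((i < n - s + 1)%N && (j < n - s + 1)%N)].
Arguments join_graph : clear implicits.

(* Main.v *)
Require Import Defs.
From HB Require Import structures.
From mathcomp Require Import all_boot all_order all_algebra.
From mathcomp Require Import boolp classical_sets reals.
From mathcomp Require Import ring lra zify.
Set Implicit Arguments. Unset Strict Implicit. Unset Printing Implicit Defensive.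
Import Order.TTheory GRing.Theory Num.Theory.
Local Open Scope ring_scope.

Definition wt (R : realType) (n s : nat) (al be ga : R) (k : nat) : R :=
  if (k < s)%N then al else if (k < n - s + 1)%N then be else ga.

Lemma join_sym n s (i j : 'I_n) : join_graph n s i j = join_graph n s j i.
Proof.
rewrite /join_graph eq_sym; congr (_ && _).
by case: (i < s)%N; case: (j < s)%N => //=; rewrite andbC.
Qed.

Lemma sum_const_range (R : realType) (a b : nat) (F : nat -> R) (c : R) :
  (forall k, (a <= k < b)%N -> F k = c) ->
  \sum_(a <= k < b) F k = c *+ (b - a).
Proof. by move=> h; rewrite (eq_big_nat _ _ h) sumr_const_nat. Qed.

Lemma adj_sum (R : realType) n s (al be ga : R) (j : 'I_n) :
  (1 <= s)%N -> (2 * s <= n + 1)%N ->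
  \sum_(i < n) wt n s al be ga i * (join_graph n s i j)%:R =
  if (j < s)%N then al *+ s + be *+ (n - s + 1 - s) + ga *+ (n - (n - s + 1)) - al
  else if (j < n - s + 1)%N then al *+ s + be *+ (n - s + 1 - s) - be
  else al *+ s.
Proof.
move=> s1 s2.
pose h (k : nat) := [|| (k < s)%N, (j < s)%N | ((k < n - s + 1)%N && (j < n - s + 1)%N)].
have eh : forall i : 'I_n, (join_graph n s i j)%:R =
    (h i)%:R - (i == j)%:R * (h j)%:R :> R.
  move=> i; rewrite /join_graph /h; case: eqP => [->|ne] /=.
    by rewrite mul1r subrr.
  by rewrite mul0r subr0.
rewrite (eq_bigr (fun i : 'I_n => wt n s al be ga i * (h i)%:R
    - wt n s al be ga i * ((i == j)%:R * (h j)%:R))); last first.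
  by move=> i _; rewrite eh mulrBr.
rewrite sumrB.
have -> : \sum_(i < n) wt n s al be ga i * ((i == j)%:R * (h j)%:R) =
    wt n s al be ga j * (h j)%:R.
  rewrite (bigD1 j) //= eqxx mul1r big1 ?addr0 // => i ne.
  by rewrite (negPf ne) mul0r mulr0.
rewrite -(big_mkord predT (fun k => wt n s al be ga k * (h k)%:R)).
have hsL : (s <= n - s + 1)%N by lia.
have hLn : (n - s + 1 <= n)%N by lia.
rewrite (@big_cat_nat _ _ _ s 0 n) ?(leq_trans hsL hLn) // (@big_cat_nat _ _ _ (n - s + 1) s n) //=.
rewrite (@sum_const_range _ 0 s _ al); last first.
  by move=> k /andP[_ hk]; rewrite /wt /h hk /= mulr1.
rewrite (@sum_const_range _ s (n - s + 1) _ (be * (j < n - s + 1)%N%:R)); last first.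
  move=> k /andP[hk1 hk2]; rewrite /wt /h ltnNge hk1 hk2 /=.
  by case: (ltnP j s) => //= hj; rewrite (leq_trans hj hsL).
rewrite (@sum_const_range _ (n - s + 1) n _ (ga * (j < s)%N%:R)); last first.
  move=> k /andP[hk1 hk2]; rewrite /wt /h ltnNge (leq_trans _ hk1) //.
  by rewrite ltnNge hk1 /= orbF.
rewrite subn0 /wt /h.
case: (ltnP j s) => hj1 /=.
  by rewrite (leq_trans hj1 hsL) /= !mulr1 addrA.
case: (ltnP j (n - s + 1)) => hj2 /=.
  by rewrite !mulr1 mulr0 mul0rn addr0.
by rewrite !mulr0 !mul0rn !addr0 subr0.
Qed.

Lemma deg_sum (R : realType) n s (j : 'I_n) :
  (deg (join_graph n s) j)%:R =
  \sum_(i < n) wt n s (1 : R) 1 1 i * (join_graph n s i j)%:R.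
Proof.
rewrite /deg -sum1_card natr_sum big_mkcond /=.
apply: eq_bigr => i _; rewrite inE join_sym.
have -> : wt n s 1 1 1 i = 1 :> R by rewrite /wt; case: ifP => //; case: ifP.
by rewrite mul1r; case: (join_graph n s i j).
Qed.

Lemma col_sum (R : realType) n s (al be ga : R) (j : 'I_n) :
  (1 <= s)%N -> (2 * s <= n + 1)%N ->
  \sum_(i < n) wt n s al be ga i * signless_lap R (join_graph n s) i j =
  if (j < s)%N then al * (n%:R + s%:R - 2) + be * (n%:R - 2 * s%:R + 1) + ga * (s%:R - 1)
  else if (j < n - s + 1)%N then al * s%:R + be * (2 * n%:R - 3 * s%:R)
  else al * s%:R + ga * s%:R.
Proof.
move=> s1 s2.
have -> : \sum_(i < n) wt n s al be ga i * signless_lap R (join_graph n s) i j =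
   \sum_(i < n) wt n s al be ga i * (join_graph n s i j)%:R
   + wt n s al be ga j * (deg (join_graph n s) j)%:R.
  rewrite /signless_lap.
  rewrite (eq_bigr (fun i : 'I_n => wt n s al be ga i * (join_graph n s i j)%:R
     + wt n s al be ga i * ((deg (join_graph n s) i)%:R *+ (i == j)))); last first.
    by move=> i _; rewrite !mxE mulrDr.
  rewrite big_split /=; congr (_ + _).
  rewrite (bigD1 j) //= eqxx mulr1n big1 ?addr0 // => i ne.
  by rewrite (negPf ne) mulr0n mulr0.
rewrite deg_sum !adj_sum //.
have E1 : (n - s + 1 - s)%:R = n%:R - 2 * s%:R + 1 :> R.
  have : (n - s + 1 - s + 2 * s = n + 1)%N by lia.
  move/(congr1 (fun k => k%:R : R)); rewrite !natrD.
  move: (n - s + 1 - s)%:R => X h.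
  by apply: (addIr (s%:R + (s%:R + 0))); rewrite h; ring.
have E2 : (n - (n - s + 1))%:R = s%:R - 1 :> R.
  have : (n - (n - s + 1) + 1 = s)%N by lia.
  move/(congr1 (fun k => k%:R : R)); rewrite !natrD.
  move: (n - (n - s + 1))%:R => X h.
  by apply: (addIr 1); rewrite h; ring.
have F1 : forall x : R, x *+ (n - s + 1 - s) = x * (n%:R - 2 * s%:R + 1).
  by move=> x; rewrite -E1 mulr_natr.
have F2 : forall x : R, x *+ (n - (n - s + 1)) = x * (s%:R - 1).
  by move=> x; rewrite -E2 mulr_natr.
have F3 : forall x : R, x *+ s = x * s%:R by move=> x; rewrite mulr_natr.
rewrite /wt; case: ifP => h1; last case: ifP => h2;
  rewrite ?F1 ?F2 ?E1 ?E2; ring.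
Qed.
Lemma eig_bound (R : realFieldType) n (M : 'M[R]_n) (w : 'I_n -> R) (U a : R) :
  (forall i j, 0 <= M i j) -> (forall i, 0 < w i) ->
  (forall j, \sum_i w i * M i j <= U * w j) -> eigenvalue M a -> a <= U.
Proof.
move=> M0 w0 hU /eigenvalueP [v vM /matrix0Pn [i0 [j0 hj0]]].
rewrite [i0]ord1 in hj0.
pose f j := `|v 0 j| / w j.
have [x _ jmax] := @arg_maxP _ _ _ j0 predT f isT.

have fpos : 0 < f x.
  apply: (lt_le_trans _ (jmax j0 isT)).
  by rewrite /f divr_gt0 ?normr_gt0.
have vpos : 0 < `|v 0 x| by move: fpos; rewrite /f pmulr_lgt0 ?invr_gt0.
have e1 : a * v 0 x = \sum_i v 0 i * M i x.
  have := congr1 (fun m : 'rV[R]_n => m 0 x) vM; rewrite !mxE => <-; by [].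
have e2 : `|a| * `|v 0 x| <= f x * \sum_i w i * M i x.
  rewrite -normrM e1 mulr_sumr.
  apply: (le_trans (ler_norm_sum _ _ _)); apply: ler_sum => i _.
  rewrite normrM (ger0_norm (M0 _ _)) mulrA ler_wpM2r //.
  by rewrite -ler_pdivrMr //; apply: (jmax i isT).
have e3 : f x * \sum_i w i * M i x <= U * `|v 0 x|.
  apply: (le_trans (ler_wpM2l (ltW fpos) (hU x))).
  by rewrite mulrCA /f divfK ?gt_eqF.
have : `|a| <= U by rewrite -(ler_pM2r vpos); apply: le_trans e2 e3.
by apply: le_trans; apply: ler_norm.
Qed.
Ltac pos := repeat first [apply: ler0n | assumption | apply: addr_ge0 | apply: mulr_ge0 | apply: exprn_ge0].

Definition PPx (R : realFieldType) (a b e c : R) : R :=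
  let d := 2 + a in let k := 1 + b in let m := 5 * d - 5 + e in
  let D0 := 2 * m + d - 4 + c in
  d * (d - 1) * (d + c) * (D0 - k) + k * (2 * m - 2 * d - k + 2 * c + 1) * D0 * (D0 - k)
  - (d + k) * (d + k - 1) * (d + 3 * k + c) * D0.

Definition Q0r (R : realFieldType) (a e c : R) : R := 240*e + 84*e^+2 + 8*e^+3 + 142*c + 106*c*e + 16*c*e^+2 + 32*c^+2 + 10*c^+2*e + 2*c^+3 + 960*a + 788*a*e + 120*a*e^+2 + 496*a*c + 160*a*c*e + 50*a*c^+2 + 1748*a^+2 + 584*a^+2*e + 390*a^+2*c + 912*a^+3.
Definition QBr (R : realFieldType) (a e c : R) : R := 390*e + 298*e^+2 + 74*e^+3 + 6*e^+4 + 629*c*e + 193*c*e^+2 + 19*c*e^+3 + 180*c^+2 + 108*c^+2*e + 16*c^+2*e^+2 + 12*c^+3 + 4*c^+3*e + 273*a + 1821*a*e + 859*a*e^+2 + 103*a*e^+3 + 2911*a*c + 1822*a*c*e + 275*a*c*e^+2 + 540*a*c^+2 + 160*a*c^+2*e + 20*a*c^+3 + 1085*a^+2 + 2736*a^+2*e + 607*a^+2*e^+2 + 4225*a^+2*c + 1305*a^+2*c*e + 400*a^+2*c^+2 + 1407*a^+3 + 1329*a^+3*e + 2025*a^+3*c + 595*a^+4.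
Definition Q2r (R : realFieldType) (a e c : R) : R := 256 + 96*e + 8*e^+2 + 64*c + 12*c*e + 4*c^+2 + 560*a + 96*a*e + 70*a*c + 286*a^+2.
Definition Q3r (R : realFieldType) (a e c : R) : R := 16 + 4*e + 2*c + 22*a.

Lemma keyP_id (R : realFieldType) (a b e c : R) :
  4 * (5 * a + 1 + e) * PPx a b e c =
   4 * ((5 * a + 1 + e) - 2 * b) * (124 + Q0r a e c) + 2 * b * (663 * c + QBr a e c)
   + (5 * a + 1 + e) * b * ((5 * a + 1 + e) - 2 * b) *
     (2 * Q2r a e c + Q3r a e c * ((5 * a + 1 + e) + 2 * b)).
Proof. rewrite /PPx /Q0r /QBr /Q2r /Q3r; ring. Qed.

Lemma Q0r_ge0 (R : realFieldType) (a e c : R) : 0 <= a -> 0 <= e -> 0 <= c -> 0 <= Q0r a e c.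
Proof. by move=> *; rewrite /Q0r; pos. Qed.
Lemma QBr_ge0 (R : realFieldType) (a e c : R) : 0 <= a -> 0 <= e -> 0 <= c -> 0 <= QBr a e c.
Proof. by move=> *; rewrite /QBr; pos. Qed.
Lemma Q2r_ge0 (R : realFieldType) (a e c : R) : 0 <= a -> 0 <= e -> 0 <= c -> 0 <= Q2r a e c.
Proof. by move=> *; rewrite /Q2r; pos. Qed.
Lemma Q3r_ge0 (R : realFieldType) (a e c : R) : 0 <= a -> 0 <= e -> 0 <= c -> 0 <= Q3r a e c.
Proof. by move=> *; rewrite /Q3r; pos. Qed.

Lemma keyP (R : realFieldType) (a b e c : R) :
  0 <= a -> 0 <= b -> 0 <= e -> 0 < c -> 2 * b <= 5 * a + 1 + e -> 0 < PPx a b e c.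
Proof.
move=> ha hb he hc hB.
have hc' : 0 <= c by apply: ltW.
have h0 := Q0r_ge0 ha he hc'. have h1 := QBr_ge0 ha he hc'.
have h2 := Q2r_ge0 ha he hc'. have h3 := Q3r_ge0 ha he hc'.
have id := keyP_id a b e c.
move: (Q0r a e c) (QBr a e c) (Q2r a e c) (Q3r a e c) h0 h1 h2 h3 id => X0 X1 X2 X3 h0 h1 h2 h3 id.
have hW : 0 < 5 * a + 1 + e by lra.
move: (5 * a + 1 + e) hB hW id => W hB hW id.
have hrest : 0 <= W * b * (W - 2 * b) * (2 * X2 + X3 * (W + 2 * b)).
  apply: mulr_ge0; first (apply: mulr_ge0; first apply: mulr_ge0); try lra.
  apply: addr_ge0; first lra; apply: mulr_ge0; lra.
have : 0 < 4 * W * PPx a b e c.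
  rewrite id.
  have [b0|bpos] := eqVneq b 0.
    rewrite b0 !(mulr0, mul0r, addr0, subr0).
    apply: mulr_gt0; first by apply: mulr_gt0.
    lra.
  have bp : 0 < b by rewrite lt_def bpos hb.
  have : 0 < 2 * b * (663 * c + X1) by apply: mulr_gt0; lra.
  have : 0 <= 4 * (W - 2 * b) * (124 + X0) by apply: mulr_ge0; lra.
  lra.
by rewrite pmulr_rgt0 // mulr_gt0.
Qed.

Definition Tpoly (R : realFieldType) (N S r : R) : R :=
  r * (r - 2 * N + 3 * S) * (r - S) -
  ((N + S - 2) * (r - 2 * N + 3 * S) * (r - S) + S * (N - 2 * S + 1) * (r - S)
   + S * (S - 1) * (r - 2 * N + 3 * S)).

Lemma key_id (R : realFieldType) (N S D r : R) :
  Tpoly N S r * (r - D) =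
  PPx (D - 2) (S - D - 1) (N - 7 * D + 7) (r - 2 * N + 2 * D) + Tpoly N D r * (r - S).
Proof. rewrite /Tpoly /PPx; ring. Qed.

Lemma key (R : realFieldType) (N S D r : R) :
  2 <= D -> 7 * D - 7 <= N -> D + 1 <= S -> 2 * S <= N -> 2 * N - 2 * D < r ->
  Tpoly N D r = 0 -> 0 < Tpoly N S r.
Proof.
move=> h1 h2 h3 h4 h5 h6.
have hP : 0 < PPx (D - 2) (S - D - 1) (N - 7 * D + 7) (r - 2 * N + 2 * D).
  apply: keyP; lra.
have := key_id N S D r; rewrite h6 mul0r addr0 => e.
have hrD : 0 < r - D by lra.
by rewrite -(pmulr_lgt0 _ hrD) e.
Qed.

Lemma root_exists (R : realType) (N D : R) : 2 <= D -> 7 * D - 7 <= N ->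
  exists2 r, 2 * N - 2 * D < r & Tpoly N D r = 0.
Proof.
move=> hD2 hN.
pose p : {poly R} := 'X * ('X - (2 * N - 3 * D)%:P) * ('X - D%:P) -
  ((N + D - 2)%:P * ('X - (2 * N - 3 * D)%:P) * ('X - D%:P)
   + (D * (N - 2 * D + 1))%:P * ('X - D%:P) + (D * (D - 1))%:P * ('X - (2 * N - 3 * D)%:P)).
have hp : forall x, p.[x] = Tpoly N D x.
  by move=> x; rewrite /p !hornerE /Tpoly; ring.
have e0 : Tpoly N D (2 * N - 2 * D) = - (D * (D - 1) * (2 * N - 2 * D)).
  by rewrite /Tpoly; ring.
have h0 : Tpoly N D (2 * N - 2 * D) < 0.
  rewrite e0 oppr_lt0; apply: mulr_gt0; first (apply: mulr_gt0); lra.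
have e1 : Tpoly N D (2 * N) = (2 * N - D) * D * (2 * N - D + 5) - 3 * D * D * (D - 1).
  by rewrite /Tpoly; ring.
have h1 : 0 < Tpoly N D (2 * N).
  rewrite e1 subr_gt0.
  have hu : 3 * D <= 2 * N - D by lra.
  have hD : 0 < D by lra.
  apply: (@lt_le_trans _ _ (3 * D * D * (3 * D + 5))).
    rewrite -subr_gt0 -mulrBr; apply: mulr_gt0; first (apply: mulr_gt0); lra.
  rewrite -subr_ge0.
  have -> : (2 * N - D) * D * (2 * N - D + 5) - 3 * D * D * (3 * D + 5)
    = D * ((2 * N - D - 3 * D) * (2 * N - D + 3 * D + 5)) by ring.
  apply: mulr_ge0; first lra; apply: mulr_ge0; lra.
have [r /andP[r1 r2] rt] : exists2 r, 2 * N - 2 * D <= r <= 2 * N & root p r.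
  apply: poly_ivt; first lra.
  by rewrite !hp; apply/andP; split; apply: ltW.
exists r; last by move: rt; rewrite /root hp => /eqP.
rewrite lt_neqAle r1 andbT; apply/eqP => e.
by move: rt; rewrite /root hp -e (lt_eqF h0).
Qed.

Lemma Q_ge0 (R : realType) n (e : rel 'I_n) i j : 0 <= signless_lap R e i j.
Proof. by rewrite !mxE; apply: addr_ge0; [apply: ler0n | apply: mulrn_wge0; apply: ler0n]. Qed.

Lemma vmul (R : realType) n s (al be ga : R) (j : 'I_n) :
  ((\row_(k < n) wt n s al be ga k) *m signless_lap R (join_graph n s)) 0 j =
  \sum_(i < n) wt n s al be ga i * signless_lap R (join_graph n s) i j.
Proof. by rewrite mxE; apply: eq_bigr => i _; rewrite mxE. Qed.

Lemma eig_delta (R : realType) n d (r : R) : (2 <= d)%N -> (2 * d <= n)%N ->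
  2 * n%:R - 2 * d%:R < r -> Tpoly n%:R d%:R r = 0 ->
  eigenvalue (signless_lap R (join_graph n d)) r.
Proof.
move=> hd hdn hr ht.
have hD : (2 : R) <= d%:R by rewrite (ler_nat R 2 d).
have hN : 2 * (d%:R : R) <= n%:R by rewrite -natrM ler_nat.
set N : R := n%:R in hr ht hN *; set D : R := d%:R in hr ht hD hN *.
have p1 : r - 2 * N + 3 * D != 0 by rewrite gt_eqF //; lra.
have p2 : r - D != 0 by rewrite gt_eqF //; lra.
pose y := D / (r - 2 * N + 3 * D); pose z := D / (r - D).
apply/eigenvalueP; exists (\row_k wt n d 1 y z k).
  apply/rowP => j; rewrite vmul col_sum; [|lia|lia].
  rewrite !mxE /wt -/N -/D; case: ifP => h1; [|case: ifP => h2].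
  - apply/eqP; rewrite -subr_eq0; apply/eqP.
    have -> : 1 * (N + D - 2) + y * (N - 2 * D + 1) + z * (D - 1) - r * 1 =
       - Tpoly N D r / ((r - 2 * N + 3 * D) * (r - D)).
      by rewrite /y /z /Tpoly; field; apply/andP.
    by rewrite ht oppr0 mul0r.
  - by rewrite /y; field.
  - by rewrite /z; field.

have n0 : (0 < n)%N by lia.
apply/negP => /eqP h0.
have := congr1 (fun m : 'rV[R]_n => m 0 (Ordinal n0)) h0; rewrite !mxE /wt /=.
case: ifP => h; last by lia.
by move/eqP; rewrite oner_eq0.
Qed.

Lemma eig_ub (R : realType) n s (a : R) : (1 <= s)%N -> (2 * s <= n)%N ->
  eigenvalue (signless_lap R (join_graph n s)) a -> a <= 2 * n%:R.
Proof.
move=> h1 h2; apply: (@eig_bound _ _ _ (wt n s 1 1 1)).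
- exact: Q_ge0.
- by move=> i; rewrite /wt; case: ifP => _ //; case: ifP.
move=> j; rewrite col_sum; [|lia|lia].
have hS : (1 : R) <= s%:R by rewrite (ler_nat R 1 s).
have hN : 2 * (s%:R : R) <= n%:R by rewrite -natrM ler_nat.
move: (s%:R : R) (n%:R : R) hS hN => S N hS hN.
rewrite /wt; case: ifP => _; [|case: ifP => _]; lra.
Qed.

Lemma eig_s (R : realType) n s (r : R) : (1 <= s)%N -> (2 * s <= n)%N ->
  0 < Tpoly n%:R s%:R r -> 0 < r - 2 * n%:R + 3 * s%:R -> 0 < r - s%:R ->
  exists2 eps, 0 < eps &
    forall a, eigenvalue (signless_lap R (join_graph n s)) a -> a <= r - eps.
Proof.
move=> h1 h2 hK hp1 hp2.
have hS : (1 : R) <= s%:R by rewrite (ler_nat R 1 s).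
have hN : 2 * (s%:R : R) <= n%:R by rewrite -natrM ler_nat.
have h2' : (2 * s <= n + 1)%N by lia.
have csum := fun al be ga j => @col_sum R n s al be ga j h1 h2'.
move: (s%:R : R) (n%:R : R) hS hN hK hp1 hp2 csum => S N hS hN hK hp1 hp2 csum.
set K := Tpoly N S r in hK.
have hrho : 0 < (r - 2 * N + 3 * S) * (r - S) by apply: mulr_gt0.
have hNS : 0 < N - S by lra.
pose t := K / (2 * ((r - 2 * N + 3 * S) * (r - S)) * (N - S)).
have ht : 0 < t by rewrite /t divr_gt0 // mulr_gt0 // mulr_gt0.
pose be := S / (r - 2 * N + 3 * S) + t.
pose ga := S / (r - S) + t.
have hbe : 0 < be by rewrite /be addr_gt0 // divr_gt0 //; lra.
have hga : 0 < ga by rewrite /ga addr_gt0 // divr_gt0 //; lra.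
pose mA := K / (2 * ((r - 2 * N + 3 * S) * (r - S))).
pose mB := t * (r - 2 * N + 3 * S) / be.
pose mC := t * (r - S) / ga.
have hmA : 0 < mA by rewrite /mA divr_gt0 // mulr_gt0.
have hmB : 0 < mB by rewrite /mB divr_gt0 // mulr_gt0.
have hmC : 0 < mC by rewrite /mC divr_gt0 // mulr_gt0.
exists (Num.min mA (Num.min mB mC)).
  by rewrite !lt_min hmA hmB hmC.
move=> a; apply: (@eig_bound _ _ _ (wt n s 1 be ga)).
- exact: Q_ge0.
- by move=> i; rewrite /wt; case: ifP => _ //; case: ifP.
move=> j; rewrite csum.
have p1 : r - 2 * N + 3 * S != 0 by rewrite gt_eqF.
have p2 : r - S != 0 by rewrite gt_eqF.
have p3 : N - S != 0 by rewrite gt_eqF.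
rewrite /wt; case: ifP => _; [|case: ifP => _].
- have -> : 1 * (N + S - 2) + be * (N - 2 * S + 1) + ga * (S - 1) = r - mA.
    by rewrite /be /ga /mA /t /K /Tpoly; field; rewrite p1 p2 p3.
  rewrite mulr1 lerD2l lerN2.
  by rewrite ge_min lexx.
- have -> : 1 * S + be * (2 * N - 3 * S) = r * be - mB * be.
    by rewrite /mB divfK ?gt_eqF // /be; field.
  rewrite mulrBl lerD2l lerN2 ler_pM2r //.
  by rewrite ge_min ge_min lexx orbT.
- have -> : 1 * S + ga * S = r * ga - mC * ga.
    by rewrite /mC divfK ?gt_eqF // /ga; field.
  rewrite mulrBl lerD2l lerN2 ler_pM2r //.
  by rewrite ge_min ge_min lexx !orbT.
Qed.

Theorem mainTheorem5 (R : realType) (delta n s : nat) :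
  (2 <= delta)%N -> (7 * delta - 7 <= n)%N ->
  (delta + 1 <= s)%N -> (2 * s <= n)%N ->
  rhoQ R (join_graph n s) < rhoQ R (join_graph n delta).
Proof.
move=> hd hn hs hsn.
have hdn : (2 * delta <= n)%N by lia.
have h1s : (1 <= s)%N by lia.
have h1d : (1 <= delta)%N by lia.
have hn7 : (7 * delta <= n + 7)%N by lia.
have rD : (2 : R) <= delta%:R by rewrite (ler_nat R 2).
have rN : 7 * (delta%:R : R) - 7 <= n%:R.
  have := hn7; rewrite -(ler_nat R) natrM natrD.
  move: (delta%:R : R) (n%:R : R) => x y; lra.
have rS1 : (delta%:R : R) + 1 <= s%:R by move: hs; rewrite -(ler_nat R) natrD.
have rS2 : 2 * (s%:R : R) <= n%:R by rewrite -natrM ler_nat.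
have [r hr ht] := root_exists rD rN.
have eigd := eig_delta hd hdn hr ht.
have hK : 0 < Tpoly n%:R s%:R r := key rD rN rS1 rS2 hr ht.
have [eps he hub] := eig_s h1s hsn hK (ltac:(lra)) (ltac:(lra)).
have rhod : r <= rhoQ R (join_graph n delta).
  have hb : has_ubound [set a : R | eigenvalue (signless_lap R (join_graph n delta)) a].
    by exists (2 * n%:R) => a ha; apply: (eig_ub h1d hdn).
  exact: (ub_le_sup hb eigd).
case: (pselect (exists a, eigenvalue (signless_lap R (join_graph n s)) a)) => [[a0 ha0]|nex].
  have : rhoQ R (join_graph n s) <= r - eps.
    apply: ge_sup; first by exists a0.
    by move=> a ha; apply: hub.
  move=> h; apply: (le_lt_trans h); apply: (lt_le_trans _ rhod); lra.
have -> : rhoQ R (join_graph n s) = 0.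
  rewrite /rhoQ; set E := (X in sup X).
  have -> : E = classical_sets.set0.
    by apply/seteqP; split => x //= hx; apply: nex; exists x.
  exact: sup0.
by apply: (lt_le_trans _ rhod); lra.
Qed.
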